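(* Let $A=(a(x),dF(x))$ and $B=(b(x),dF(x))$ be games. If $g(p)$ exists for each $p\in[0,1]$, then $g$ is concave on $[0,1]$.
   Context: A game is a pair $(a(x),dF(x))$ with $dF$ a probability measure on $\mathbb{R}$ and $a\ge0$ measurable with finite positive integral. A real $r$ is fixed. For $p\in[0,1]$ put $c_p(x):=pa(x)+(1-p)b(x)$. $g(p)$ denotes the value $u>0$ such that for some $t_u$ (with $0<t_u\le1$) the system $\exp\big(\int\log(\frac{c_p(x)}{u}t_u-t_u+1)\,dF(x)\big)=e^r$, $\int\frac{c_p(x)-u}{c_p(x)t_u-ut_u+u}\,dF(x)=0$ holds; such a solution is unique when it exists, and ''$g(p)$ exists'' means it exists. *)

(* Defs.v *)
From HB Require Import structures.
From mathcomp Require Import all_boot all_order all_algebra.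
From mathcomp Require Import all_classical all_reals all_analysis.
Set Implicit Arguments. Unset Strict Implicit. Unset Printing Implicit Defensive.
Import Order.TTheory GRing.Theory Num.Theory.
Local Open Scope classical_set_scope.
Local Open Scope ring_scope.

Definition game (R : realType) (F : probability R R) (a : R -> R) : Prop :=
  measurable_fun setT a /\ (forall x, 0 <= a x) /\
  (0 < \int[F]_x (a x)%:E)%E /\ (\int[F]_x (a x)%:E < +oo)%E.

Definition cp (R : realType) (a b : R -> R) (p : R) (x : R) : R :=
  p * a x + (1 - p) * b x.

Definition elog (R : realType) (y : R) : \bar R :=
  if 0 < y then (ln y)%:E else -oo%E.

Definition g_sol (R : realType) (F : probability R R) (a b : R -> R) (r p u : R)
  : Prop :=
  0 < u /\ exists t : R, 0 < t <= 1 /\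
    expeR (\int[F]_x elog (cp a b p x / u * t - t + 1)) = (expR r)%:E /\
    (\int[F]_x ((cp a b p x - u) / (cp a b p x * t - u * t + u))%:E = 0)%E.

(* g(p): the (unique, when it exists) solution u; chosen via xget *)
Definition g (R : realType) (F : probability R R) (a b : R -> R) (r p : R) : R :=
  xget 0 [set u | g_sol F a b r p u].

Definition concave_on01 (R : realType) (f : R -> R) : Prop :=
  forall x y l : R, 0 <= x <= 1 -> 0 <= y <= 1 -> 0 <= l <= 1 ->
    l * f x + (1 - l) * f y <= f (l * x + (1 - l) * y).

(* Main.v *)
Require Import Defs.
From HB Require Import structures.
From mathcomp Require Import all_boot all_order all_algebra.
From mathcomp Require Import all_classical all_reals all_analysis.
From mathcomp Require Import measurable_realfun.
From mathcomp Require Import ring lra.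
Import Order.TTheory GRing.Theory Num.Theory.
Local Open Scope ring_scope.

Section S.
Variable R : realType.

Lemma mexpNln : measurable_fun [set: R] (fun x : R => expR (- ln x)).
Proof.
apply: measurableT_comp => //; apply: measurableT_comp => //.
Qed.

Lemma minv : measurable_fun [set: R] (@GRing.inv R).
Proof.
have -> : (@GRing.inv R) = fun x => if 0 < x then expR (- ln x)
   else if x < 0 then - expR (- ln (- x)) else 0.
  apply: funext => x; case: ltgtP => hx.
  - by rewrite expRN lnK ?posrE.
  - by rewrite expRN lnK ?posrE ?oppr_gt0 // invrN opprK.
  - by rewrite -hx invr0.
apply: measurable_fun_ifT.
- exact: measurable_fun_ltr.
- exact: mexpNln.
apply: measurable_fun_ifT.
- exact: measurable_fun_ltr.
- apply: measurableT_comp => //; apply: (measurableT_comp mexpNln) => //.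
- exact: measurable_cst.
Qed.

Lemma fin_integrable (F : probability R R) (f : R -> \bar R) :
  measurable_fun [set: R] f -> (\int[F]_x f x \is a fin_num)%E -> F.-integrable setT f.
Proof.
move=> mf; rewrite integralE fin_numB => /andP[hp hn].
apply/integrableP; split => //.
rewrite (_ : (fun x => `|f x|%E) = (fun x => f^\+ x + f^\- x)%E); last first.
  by apply: funext => x; rewrite -[RHS]/((f^\+ \+ f^\-) x)%E -fune_abse.
rewrite ge0_integralD //; last first.
all: try (by move=> *; apply: funeneg_ge0).
all: try (by move=> *; apply: funepos_ge0).
all: try (by apply: measurable_funepos).
all: try (by apply: measurable_funeneg).
by rewrite ltey_eq fin_numD hp hn.
Qed.

Variables (F : probability R R) (a b : R -> R) (r : R).
Hypotheses (ma : measurable_fun [set: R] a) (mb : measurable_fun [set: R] b).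
Hypotheses (a0 : forall x, 0 <= a x) (b0 : forall x, 0 <= b x).

Definition Zf p u t x := cp a b p x / u * t - t + 1.
Definition Zt p u t x := if 0 < Zf p u t x then Zf p u t x else 1.

Lemma mcp p : measurable_fun [set: R] (cp a b p).
Proof.
by rewrite /cp; apply: measurable_funD; apply: measurable_funM.
Qed.

Lemma mZf p u t : measurable_fun [set: R] (Zf p u t).
Proof.
rewrite /Zf; apply: measurable_funD => //; apply: measurable_funB => //.
apply: measurable_funM => //; apply: measurable_funM => //; exact: mcp.
Qed.

Lemma mZt p u t : measurable_fun [set: R] (Zt p u t).
Proof.
rewrite /Zt; apply: measurable_fun_ifT => //.
- exact: measurable_fun_ltr (mZf p u t).
- exact: mZf.
Qed.

Lemma Zt_gt0 p u t x : 0 < Zt p u t x.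
Proof. by rewrite /Zt; case: ifP. Qed.

Lemma cp_ge0 p x : 0 <= p <= 1 -> 0 <= cp a b p x.
Proof.
case/andP=> p0 p1; rewrite /cp addr_ge0 // mulr_ge0 //; by rewrite subr_ge0.
Qed.


Lemma sol_facts p u t : 0 < u -> 0 < t <= 1 ->
  expeR (\int[F]_x elog (cp a b p x / u * t - t + 1)) = (expR r)%:E ->
  (\int[F]_x ((cp a b p x - u) / (cp a b p x * t - u * t + u))%:E = 0)%E ->
  [/\ {ae F, forall x, 0 < Zf p u t x},
      F.-integrable [set: R] (EFin \o (fun x => ln (Zt p u t x))),
      (\int[F]_x (ln (Zt p u t x))%:E = r%:E)%E &
      (\int[F]_x ((Zt p u t x)^-1)%:E = 1)%E].
Proof.
move=> u0 /andP[t0 t1] hE hfoc.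
have hr : (\int[F]_x elog (Zf p u t x) = r%:E)%E.
  by apply: expeR_inj; rewrite hE.
have melog : measurable_fun [set: R] (fun x => elog (Zf p u t x)).
  rewrite /elog; apply: measurable_fun_ifT => //.
  - exact: measurable_fun_ltr (mZf p u t).
  - apply/measurable_EFinP; apply: measurableT_comp => //; exact: mZf.
have hi : F.-integrable [set: R] (fun x => elog (Zf p u t x)).
  by apply: fin_integrable => //; rewrite hr.
have hae : {ae F, forall x, 0 < Zf p u t x}.
  apply: filterS (integrable_ae measurableT hi) => x /(_ I).
  by rewrite /elog; case: ifP.
have mL : measurable_fun [set: R] (fun x => (ln (Zt p u t x))%:E).
  apply/measurable_EFinP; apply: measurableT_comp => //; exact: mZt.
have hL : (\int[F]_x (ln (Zt p u t x))%:E = r%:E)%E.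
  rewrite -hr; apply: ae_eq_integral => //.
  apply: filterS hae => x hx _; by rewrite /elog /Zt hx.
split => //.
  by apply: fin_integrable => //; rewrite hL.
have u0' : u != 0 by rewrite lt0r_neq0.
have t0' : t != 0 by rewrite lt0r_neq0.
pose h x := (1 - (Zt p u t x)^-1) / t.
have mV : measurable_fun [set: R] (fun x => (Zt p u t x)^-1).
  by apply: measurableT_comp; [exact: minv | exact: mZt].
have mh : measurable_fun [set: R] h.
  rewrite /h; apply: measurable_funM => //; apply: measurable_funB => //.
have mfoc : measurable_fun [set: R]
    (fun x => ((cp a b p x - u) / (cp a b p x * t - u * t + u))%:E).
  apply/measurable_EFinP; apply: measurable_funM.
    by apply: measurable_funB => //; exact: mcp.
  apply: measurableT_comp; first exact: minv.
  apply: measurable_funD => //; apply: measurable_funB => //.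
  by apply: measurable_funM => //; exact: mcp.
have hh : (\int[F]_x (h x)%:E = 0)%E.
  rewrite -hfoc; apply: ae_eq_integral => //.
    by apply/measurable_EFinP.
  apply: filterS hae => x hx _; congr EFin.
  have hz : Zf p u t x != 0 by rewrite lt0r_neq0.
  have hd : cp a b p x * t - u * t + u != 0.
    have -> : cp a b p x * t - u * t + u = u * Zf p u t x.
      by rewrite /Zf; field.
    by rewrite mulf_neq0.
  move: hz; rewrite /h /Zt hx /Zf => hz; field.
  by rewrite hd t0' u0'.
have mth : measurable_fun [set: R] (fun x => t * h x).
  by apply: measurable_funM.
have hth : (\int[F]_x (t * h x)%:E = 0)%E.
  have hhi : F.-integrable [set: R] (EFin \o h).
    by apply: fin_integrable => //; [apply/measurable_EFinP | rewrite hh].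
  under eq_integral do rewrite EFinM.
  by rewrite integralZl //= hh mule0.
have ith : F.-integrable [set: R] (EFin \o (fun x => t * h x)).
  by apply: fin_integrable => //; [apply/measurable_EFinP | rewrite hth].
have i1 : F.-integrable [set: R] (EFin \o (fun x : R => (1:R))).
  exact: finite_measure_integrable_cst.
rewrite (_ : (fun x => ((Zt p u t x)^-1)%:E) =
             (fun x => ((fun _ => (1:R)) x)%:E - ((fun x => t * h x) x)%:E)%E); last first.
  apply: funext => x /=; rewrite -EFinB; congr EFin; rewrite /h; field; by rewrite ?t0' ?(lt0r_neq0 (Zt_gt0 p u t x)).
rewrite [LHS](_ : _ = \int[F]_x (((fun _ => 1:R) x)%:E - ((fun x => t * h x) x)%:E))%E //.
rewrite (integralB_EFin measurableT i1 ith) hth sube0.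
rewrite integral_cst // mul1e; exact: probability_setT.
Qed.


Definition rint (f : R -> R) := F.-integrable [set: R] (EFin \o f).

Lemma iD f g : rint f -> rint g ->
  (\int[F]_x (f x + g x)%:E = \int[F]_x (f x)%:E + \int[F]_x (g x)%:E)%E.
Proof. by move=> hf hg; rewrite -(integralD_EFin measurableT hf hg). Qed.

Lemma iZ k f : rint f -> (\int[F]_x (k * f x)%:E = k%:E * \int[F]_x (f x)%:E)%E.
Proof.
move=> hf; under eq_integral do rewrite EFinM.
by rewrite integralZl.
Qed.

Lemma iC k : (\int[F]_x (k)%:E = k%:E)%E.
Proof.
rewrite (integral_cst F measurableT k%:E).
transitivity (k%:E * 1)%E; last exact: mule1.
by congr (_ * _)%E; exact: probability_setT.
Qed.

Lemma intD f g : rint f -> rint g -> rint (fun x => f x + g x).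
Proof.
move=> hf hg; apply: (eq_integrable measurableT _ _ _ (integrableD measurableT hf hg)) => x _.
by rewrite /= EFinD.
Qed.

Lemma intZ k f : rint f -> rint (fun x => k * f x).
Proof.
move=> hf; apply: (eq_integrable measurableT _ _ _ (integrableZl measurableT k hf)) => x _.
by rewrite /= EFinM.
Qed.

Lemma intC k : rint (fun _ => k).
Proof. exact: finite_measure_integrable_cst. Qed.


Lemma pair_le p u t p' u' t' :
  0 <= p' <= 1 -> 0 < u' -> 0 < t' <= 1 ->
  {ae F, forall x, 0 < Zf p' u' t' x} ->
  rint (fun x => ln (Zt p' u' t' x)) ->
  (\int[F]_x (ln (Zt p' u' t' x))%:E = r%:E)%E ->
  rint (fun x => ln (Zt p u t x)) ->
  (\int[F]_x (ln (Zt p u t x))%:E = r%:E)%E ->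
  (\int[F]_x ((Zt p u t x)^-1)%:E = 1)%E ->
  (u'%:E <= \int[F]_x (cp a b p' x / Zt p u t x)%:E)%E.
Proof.
move=> hp' u0 /andP[t0 t1] hae' iL' hL' iL hL hV.
have mV : measurable_fun [set: R] (fun x => (Zt p u t x)^-1).
  by apply: measurableT_comp; [exact: minv | exact: mZt].
have mQ : measurable_fun [set: R] (fun x => cp a b p' x / Zt p u t x).
  by apply: measurable_funM => //; exact: mcp.
have Q0 x : 0 <= cp a b p' x / Zt p u t x.
  by apply: divr_ge0; [exact: cp_ge0 | exact/ltW/Zt_gt0].
set J := (\int[F]_x (cp a b p' x / Zt p u t x)%:E)%E.
have J0 : (0 <= J)%E by apply: integral_ge0 => x _; rewrite lee_fin.
have [->|hJ] := eqVneq J +oo%E; first by rewrite leey.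
have Jfin : J \is a fin_num by rewrite ge0_fin_numE // ltey.
have iQ : rint (fun x => cp a b p' x / Zt p u t x).
  by apply: fin_integrable => //; apply/measurable_EFinP.
have iV : rint (fun x => (Zt p u t x)^-1).
  by apply: fin_integrable => //; [apply/measurable_EFinP | rewrite hV].
pose G x := (1 - t') * (Zt p u t x)^-1 + t' / u' * (cp a b p' x / Zt p u t x)
   + (-1) + ln (Zt p u t x).
pose Gt x := if 0 < Zf p' u' t' x then G x else 0.
have mG : measurable_fun [set: R] G.
  rewrite /G; apply: measurable_funD => //; first apply: measurable_funD => //.
  - apply: measurable_funD; apply: measurable_funM => //.
  - by apply: measurableT_comp => //; exact: mZt.
have mGt : measurable_fun [set: R] Gt.
  rewrite /Gt; apply: measurable_fun_ifT => //.
  exact: measurable_fun_ltr (mZf p' u' t').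
have iG : rint G.
  rewrite /G; apply: intD => //; apply: intD; last exact: intC.
  by apply: intD; apply: intZ.
have hG : (\int[F]_x (G x)%:E = ((1 - t') + t' / u' * fine J - 1 + r)%:E)%E.
  rewrite /G iD //; last by apply: intD; [apply: intD; apply: intZ| exact: intC].
  rewrite iD //; try (by apply: intC); try (by apply: intD; apply: intZ).
  rewrite iD //; try (by apply: intZ).
  rewrite !iZ // hL hV iC -/J -(fineK Jfin) /=.
  by rewrite mule1 -!EFinM -!EFinD; congr EFin; ring.
have hGt : (\int[F]_x (Gt x)%:E = \int[F]_x (G x)%:E)%E.
  apply: ae_eq_integral => //; try by apply/measurable_EFinP.
  by apply: filterS hae' => x hx _; rewrite /Gt hx.
have iGt : rint Gt.
  by apply: fin_integrable; [apply/measurable_EFinP | rewrite hGt hG].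
have hle : (\int[F]_x (ln (Zt p' u' t' x))%:E <= \int[F]_x (Gt x)%:E)%E.
  apply: le_integral => // x _; rewrite lee_fin /Gt.
  case: ifPn => hx; last by rewrite /Zt (negbTE hx) ln1.
  have -> : Zt p' u' t' x = Zf p' u' t' x by rewrite /Zt hx.
  have z0 := Zt_gt0 p u t x.
  have u0' : u' != 0 by rewrite lt0r_neq0.
  have z0' : Zt p u t x != 0 by rewrite lt0r_neq0.
  have e : (1 - t') * (Zt p u t x)^-1 + t' / u' * (cp a b p' x / Zt p u t x)
      = Zf p' u' t' x / Zt p u t x.
    by rewrite /Zf; field; rewrite u0' z0'.
  have := expR_ge1Dx (ln (Zf p' u' t' x / Zt p u t x)).
  rewrite lnK ?posrE ?divr_gt0 // ln_div ?posrE // => hh.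
  by rewrite /G e; lra.
move: hle; rewrite hL' hGt hG lee_fin -(fineK Jfin) lee_fin.
rewrite /= => h.
have e : t' / u' * fine J = t' * (fine J / u') by rewrite mulrAC -mulrA.
have h2 : t' * 1 <= t' * (fine J / u').
  by rewrite -e mulr1; move: h; set X := t' / u' * fine J; lra.
by move: h2; rewrite ler_pM2l // ler_pdivlMr // mul1r.
Qed.


Lemma self_eq p u t : 0 < u -> 0 < t <= 1 ->
  {ae F, forall x, 0 < Zf p u t x} ->
  (\int[F]_x ((Zt p u t x)^-1)%:E = 1)%E ->
  (\int[F]_x (cp a b p x / Zt p u t x)%:E = u%:E)%E.
Proof.
move=> u0 /andP[t0 t1] hae hV.
have u0' : u != 0 by rewrite lt0r_neq0.
have t0' : t != 0 by rewrite lt0r_neq0.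
have mV : measurable_fun [set: R] (fun x => (Zt p u t x)^-1).
  by apply: measurableT_comp; [exact: minv | exact: mZt].
have iV : rint (fun x => (Zt p u t x)^-1).
  by apply: fin_integrable => //; [apply/measurable_EFinP | rewrite hV].
have mQ : measurable_fun [set: R] (fun x => cp a b p x / Zt p u t x).
  by apply: measurable_funM => //; exact: mcp.
transitivity (\int[F]_x (u / t * (1 + (t - 1) * (Zt p u t x)^-1))%:E)%E.
  apply: ae_eq_integral => //.
  all: try (apply/measurable_EFinP; apply: measurable_funM => //;
     by apply: measurable_funD => //; apply: measurable_funM).
  apply: filterS hae => x hx _; congr EFin.
  have hz : Zf p u t x != 0 by rewrite lt0r_neq0.
  have hd : cp a b p x * t + - t * u + u != 0.
    have -> : cp a b p x * t + - t * u + u = u * Zf p u t x.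
      by rewrite /Zf; field.
    by rewrite mulf_neq0.
  rewrite /Zt hx /Zf; field.
  by rewrite hd t0' u0'.
rewrite iZ; last by apply: intD; [exact: intC | exact: intZ].
rewrite iD; [|exact: intC | exact: intZ].
rewrite iZ // iC hV mule1 -EFinD -EFinM; congr EFin; field. exact: t0'.
Qed.

Lemma main_sec :
  (forall p : R, 0 <= p <= 1 -> exists u : R, g_sol F a b r p u) ->
  concave_on01 (g F a b r).
Proof.
move=> hex.
move=> x y l hx hy hl.
set p := l * x + (1 - l) * y.
have hp : 0 <= p <= 1.
  move: hx hy hl => /andP[? ?] /andP[? ?] /andP[? ?].
  by apply/andP; split; rewrite /p; nra.
have gs z : 0 <= z <= 1 -> g_sol F a b r z (g F a b r z).
  by move=> hz; exact: (xgetPex 0 (hex z hz)).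
have [ux [tx [htx [hEx hfx]]]] := gs x hx.
have [uy [ty [hty [hEy hfy]]]] := gs y hy.
have [up [tp [htp [hEp hfp]]]] := gs p hp.
have [aex iLx hLx hVx] := sol_facts _ _ _ ux htx hEx hfx.
have [aey iLy hLy hVy] := sol_facts _ _ _ uy hty hEy hfy.
have [aep iLp hLp hVp] := sol_facts _ _ _ up htp hEp hfp.
have h1 := pair_le p (g F a b r p) tp _ _ _ hx ux htx aex iLx hLx iLp hLp hVp.
have h2 := pair_le p (g F a b r p) tp _ _ _ hy uy hty aey iLy hLy iLp hLp hVp.
have h3 := self_eq _ _ _ up htp aep hVp.
move: hl => /andP[l0 l1].
have l0' : 0 <= 1 - l by rewrite subr_ge0.
pose Q z w := cp a b z w / Zt p (g F a b r p) tp w.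
have mQ z : measurable_fun [set: R] (Q z).
  apply: measurable_funM; first exact: mcp.
  by apply: measurableT_comp; [exact: minv | exact: mZt].
have Q0 z w : 0 <= z <= 1 -> 0 <= Q z w.
  by move=> hz; apply: divr_ge0; [exact: cp_ge0 | exact/ltW/Zt_gt0].
have mkQ k z : measurable_fun [set: R] (fun w => (k * Q z w)%:E).
  by apply/measurable_EFinP; apply: measurable_funM.
have e1 k z : 0 <= k -> 0 <= z <= 1 ->
    (\int[F]_w (k * Q z w)%:E = k%:E * \int[F]_w (Q z w)%:E)%E.
  move=> k0 hz; under eq_integral do rewrite EFinM.
  apply: ge0_integralZl => //.
  - by apply/measurable_EFinP.
  - by move=> w _; rewrite lee_fin; exact: Q0.
have e3 : (\int[F]_w (l * Q x w + (1 - l) * Q y w)%:E =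
    \int[F]_w (l * Q x w)%:E + \int[F]_w ((1 - l) * Q y w)%:E)%E.
  under eq_integral do rewrite EFinD.
  apply: ge0_integralD => //.
    by move=> w _; rewrite lee_fin mulr_ge0 // Q0.
  by move=> w _; rewrite lee_fin mulr_ge0 // Q0.
have e4 : (\int[F]_w (l * Q x w + (1 - l) * Q y w)%:E =
    \int[F]_w (Q p w)%:E)%E.
  apply: eq_integral => w _; congr EFin.
  have z0 : Zt p (g F a b r p) tp w != 0 by rewrite lt0r_neq0 // Zt_gt0.
  by rewrite /Q /p /cp; field.
rewrite -lee_fin EFinD !EFinM.
apply: (le_trans (leeD (lee_wpmul2l _ h1) (lee_wpmul2l _ h2))).
- by rewrite lee_fin.
- by rewrite lee_fin.
by rewrite -e1 // -e1 // -e3 e4 h3.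
Qed.

End S.

Theorem lemmaD9 (R : realType) (F : probability R R) (a b : R -> R) (r : R) :
  game F a -> game F b ->
  (forall p : R, 0 <= p <= 1 -> exists u : R, g_sol F a b r p u) ->
  concave_on01 (g F a b r).
Proof.
move=> [ma [a0 _]] [mb [b0 _]] hex.
exact: (main_sec R F a b r ma mb a0 b0 hex).
Qed.
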